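(* Let $\theta(q,x):=\sum_{j=0}^{\infty}q^{j(j+1)/2}x^j$. For every fixed $q\in(0,1)$, the function $x\mapsto\theta(q,x)$ has no real zeros $x\geq -5$.
   Context: For $q\in(0,1)$ the series defining $\theta(q,x)$ converges for all $x\in\mathbb{C}$. *)

(* Defs.v *)
From Stdlib Require Import Reals Lra Lia.
From Coquelicot Require Import Coquelicot.
Open Scope R_scope.

(* Partial theta function: theta(q,x) = sum_{j>=0} q^{j(j+1)/2} x^j.
   j(j+1)/2 is always a natural number, so Nat.div is exact here.
   For 0<q<1 the series converges absolutely for every real x, so
   Coquelicot's total [Series] is its actual sum. *)
Definition theta (q x : R) : R :=
  Series (fun j : nat => q ^ (j * (j + 1) / 2) * x ^ j).

(* Main.v *)
Require Import Defs.
From Stdlib Require Import Reals Lra Lia Psatz.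
From Coquelicot Require Import Coquelicot.
Open Scope R_scope.

Lemma ex_series_ratio (u : nat -> R) (N : nat) :
  (forall n, 0 <= u n) ->
  (forall n, (N <= n)%nat -> u (S n) <= / 2 * u n) -> ex_series u.
Proof.
  intros H0 H1.
  apply (ex_series_incr_n u N).
  assert (Hb : forall k, u (N + k)%nat <= u N * (/2) ^ k).
  { induction k.
    - rewrite Nat.add_0_r. simpl. lra.
    - replace (N + S k)%nat with (S (N + k)) by lia.
      eapply Rle_trans. apply H1. lia.
      simpl. pose proof (H0 (N+k)%nat). nra. }
  apply (@ex_series_le R_AbsRing R_CompleteNormedModule _ (fun k => u N * (/2)^k)).
  - intros k. rewrite Rabs_pos_eq by apply H0. apply Hb.
  - apply (ex_series_scal_l (u N) (fun k => (/2)^k)).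
    apply ex_series_geom. rewrite Rabs_pos_eq; lra.
Qed.

Lemma tri_succ (n : nat) : (S n * (S n + 1) / 2 = n * (n + 1) / 2 + S n)%nat.
Proof.
  replace (S n * (S n + 1))%nat with (n * (n + 1) + S n * 2)%nat by lia.
  rewrite Nat.div_add by lia. reflexivity.
Qed.

Definition b (q x : R) (n : nat) : R := q ^ (n * (n + 1) / 2) * x ^ n.

Lemma b_succ q x n : b q x (S n) = q ^ (S n) * x * b q x n.
Proof.
  unfold b. rewrite tri_succ, pow_add. simpl. ring.
Qed.

Lemma b_succ' q x n : b q x (S n) = q * x * b q (q * x) n.
Proof.
  unfold b. rewrite tri_succ, pow_add, Rpow_mult_distr. simpl. ring.
Qed.

Lemma exists_small (q X : R) : 0 <= q < 1 -> 0 <= X -> exists N, forall n, (N <= n)%nat -> q ^ n * X <= /2.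
Proof.
  intros Hq HX.
  destruct (pow_lt_1_zero q) with (y := / (2 * (X + 1))) as [N HN].
  rewrite Rabs_pos_eq; lra.
  apply Rinv_0_lt_compat; lra.
  exists N. intros n Hn. specialize (HN n Hn).
  rewrite Rabs_pos_eq in HN by (apply pow_le; lra).
  assert (0 <= q ^ n) by (apply pow_le; lra).
  assert (q ^ n * (2 * (X + 1)) < 1).
  { apply (Rmult_lt_compat_r (2 * (X+1))) in HN; [|lra].
    rewrite Rinv_l in HN; lra. }
  nra.
Qed.

Lemma ex_series_b_abs q x : 0 <= q < 1 -> ex_series (fun n => Rabs (b q x n)).
Proof.
  intros Hq.
  destruct (exists_small q (Rabs x) Hq (Rabs_pos x)) as [N HN].
  apply (ex_series_ratio _ N).
  - intros; apply Rabs_pos.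
  - intros n Hn. rewrite b_succ. rewrite !Rabs_mult.
    rewrite (Rabs_pos_eq (q ^ S n)) by (apply pow_le; lra).
    assert (q ^ S n * Rabs x <= /2).
    { apply HN. lia. }
    pose proof (Rabs_pos (b q x n)). nra.
Qed.

Lemma ex_series_b q x : 0 <= q < 1 -> ex_series (b q x).
Proof. intros; apply ex_series_Rabs, ex_series_b_abs; auto. Qed.

Lemma theta_FE q x : 0 <= q < 1 -> theta q x = 1 + q * x * theta q (q * x).
Proof.
  intros Hq. unfold theta.
  change (Series (fun j => q ^ (j * (j + 1) / 2) * x ^ j)) with (Series (b q x)).
  change (Series (fun j => q ^ (j * (j + 1) / 2) * (q * x) ^ j)) with (Series (b q (q * x))).
  rewrite Series_incr_1 by (apply ex_series_b; auto).
  rewrite (Series_ext _ (fun n => (q * x) * b q (q * x) n)) by (intros; apply b_succ').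
  rewrite Series_scal_l. unfold b at 1. simpl. ring.
Qed.

Definition rho (q z : R) (m : nat) : R :=
  (1 - q ^ (2*m+1)) * q ^ (2*m+2) * z ^ 2 / ((1 + z * q ^ (2*m+2)) * (1 + z * q ^ (2*m+3))).

Fixpoint F (q z : R) (m : nat) : R :=
  match m with
  | O => 1
  | S m => F q z m * ((1 - q ^ (2*m+1)) * q ^ (2*m+2) * z ^ 2 /
             ((1 + z * q ^ (2*m+1)) * (1 + z * q ^ (2*m+2))))
  end.

Definition a (q z : R) (m : nat) : R := F q z m / (1 + z * q ^ (2*m+1)).

Lemma pow_pos' q n : 0 < q -> 0 < q ^ n.
Proof. intros; apply pow_lt; auto. Qed.

Lemma pow_le1 q n : 0 <= q <= 1 -> q ^ n <= 1.
Proof. intros. rewrite <- (pow1 n). apply pow_incr. lra. Qed.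

Lemma pow_decr q m n : 0 <= q <= 1 -> (m <= n)%nat -> q ^ n <= q ^ m.
Proof.
  intros Hq Hmn. replace n with (m + (n - m))%nat by lia. rewrite pow_add.
  assert (0 <= q ^ m) by (apply pow_le; lra).
  pose proof (pow_le1 q (n - m) Hq). nra.
Qed.

Ltac powfacts q m :=
  let H1 := fresh in let H2 := fresh in
  assert (H1 : 0 < q ^ m) by (apply pow_lt; lra);
  assert (H2 : q ^ m <= 1) by (apply pow_le1; lra).

Ltac neq0 := repeat split; match goal with |- ?x <> 0 => apply Rgt_not_eq; apply Rlt_gt end.

Ltac tpos z t q :=
  assert (0 <= z * t) by (apply Rmult_le_pos; lra);
  assert (0 <= z * (t * q)) by (rewrite <- Rmult_assoc; apply Rmult_le_pos; [apply Rmult_le_pos|]; lra);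
  assert (0 <= z * (t * (q * q))) by (rewrite <- Rmult_assoc; apply Rmult_le_pos; [apply Rmult_le_pos|]; nra);
  assert (0 <= z * q) by (apply Rmult_le_pos; lra).

Lemma F_nonneg q z m : 0 < q < 1 -> 0 <= z -> 0 <= F q z m.
Proof.
  intros Hq Hz. induction m; cbn [F]. lra.
  powfacts q (2*m+1)%nat. powfacts q (2*m+2)%nat.
  apply Rmult_le_pos; auto.
  apply Rmult_le_pos. apply Rmult_le_pos. apply Rmult_le_pos; lra.
  apply pow_le; lra.
  apply Rlt_le, Rinv_0_lt_compat. apply Rmult_lt_0_compat; nra.
Qed.

Lemma a_nonneg q z m : 0 < q < 1 -> 0 <= z -> 0 <= a q z m.
Proof.
  intros Hq Hz. unfold a. powfacts q (2*m+1)%nat.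
  apply Rmult_le_pos. apply F_nonneg; auto.
  apply Rlt_le, Rinv_0_lt_compat. nra.
Qed.

Lemma pow_split q m : q ^ (2 * S m + 1) = q ^ (2*m+1) * (q * q) /\
                      q ^ (2*m+2) = q ^ (2*m+1) * q /\
                      q ^ (2*m+3) = q ^ (2*m+1) * (q * q).
Proof.
  replace (2 * S m + 1)%nat with (2*m+1+2)%nat by lia.
  replace (2 * m + 2)%nat with (2*m+1+1)%nat by lia.
  replace (2 * m + 3)%nat with (2*m+1+2)%nat by lia.
  rewrite !pow_add. simpl. repeat split; ring.
Qed.

Lemma a_succ q z m : 0 < q < 1 -> 0 <= z -> a q z (S m) = a q z m * rho q z m.
Proof.
  intros Hq Hz. unfold a, rho. cbn [F].
  destruct (pow_split q m) as [E1 [E2 E3]].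
  rewrite E1, E2, E3.
  set (t := q ^ (2*m+1)). assert (0 < t) by (apply pow_lt; lra).
  tpos z t q.
  field. neq0; nra.
Qed.

Lemma pow_u q m : q ^ (2*m+1) = q ^ (2*m) * q /\ q ^ (2*m+2) = q ^ (2*m) * (q*q) /\
  q ^ (2*m+3) = q ^ (2*m) * (q*q*q) /\ q ^ (2 * S m) = q ^ (2*m) * (q*q) /\
  q ^ (2 * S m + 1) = q ^ (2*m) * (q*q*q).
Proof.
  replace (2 * S m)%nat with (2*m+2)%nat by lia.
  replace (2 * m + 2 + 1)%nat with (2*m+3)%nat by lia.
  rewrite !pow_add. simpl. repeat split; ring.
Qed.

Ltac upos z u q :=
  assert (0 < q * q) by nra;
  assert (0 < q * q * q) by nra;
  assert (0 <= z * (u * q)) by (repeat apply Rmult_le_pos; lra);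
  assert (0 <= z * (u * (q * q))) by (repeat apply Rmult_le_pos; lra);
  assert (0 <= z * (u * (q * q * q))) by (repeat apply Rmult_le_pos; lra);
  assert (0 <= z * q) by (repeat apply Rmult_le_pos; lra);
  assert (0 <= q * z * (u * q)) by (repeat apply Rmult_le_pos; lra);
  assert (0 <= q * z * (u * (q * q))) by (repeat apply Rmult_le_pos; lra).

Lemma F_qz q z m : 0 < q < 1 -> 0 <= z ->
  F q (q * z) m = q ^ (2*m) * (1 + z * q) * F q z m / (1 + z * q ^ (2*m+1)).
Proof.
  intros Hq Hz. induction m.
  - simpl. field. nra.
  - cbn [F]. rewrite IHm.
    destruct (pow_u q m) as [E1 [E2 [E3 [E4 E5]]]].
    rewrite E1, E2, E4, E5.
    set (u := q ^ (2*m)). assert (0 < u) by (apply pow_lt; lra).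
    upos z u q.
    field. neq0; nra.
Qed.

Lemma a_succ' q z m : 0 < q < 1 -> 0 <= z -> a q z (S m) = a q z m * rho q z m.
Proof.
  intros Hq Hz. unfold a, rho. cbn [F].
  destruct (pow_u q m) as [E1 [E2 [E3 [E4 E5]]]].
  rewrite E1, E2, E3, E5.
  set (u := q ^ (2*m)). assert (0 < u) by (apply pow_lt; lra).
  upos z u q.
  field. neq0; nra.
Qed.

Lemma a_FE_term q z m : 0 < q < 1 -> 0 <= z ->
  a q z m + q * z * a q (q * z) m = F q z m + F q z (S m).
Proof.
  intros Hq Hz. unfold a. rewrite F_qz by auto. cbn [F].
  destruct (pow_u q m) as [E1 [E2 [E3 [E4 E5]]]].
  rewrite E1, E2.
  set (u := q ^ (2*m)). assert (0 < u) by (apply pow_lt; lra).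
  assert (u <= 1) by (apply pow_le1; lra).
  upos z u q.
  set (Fm := F q z m).
  field. neq0; nra.
Qed.

Lemma rho_nonneg q z m : 0 < q < 1 -> 0 <= z -> 0 <= rho q z m.
Proof.
  intros Hq Hz. unfold rho.
  powfacts q (2*m+1)%nat. powfacts q (2*m+2)%nat. powfacts q (2*m+3)%nat.
  apply Rmult_le_pos. apply Rmult_le_pos. apply Rmult_le_pos; lra. apply pow_le; lra.
  apply Rlt_le, Rinv_0_lt_compat. apply Rmult_lt_0_compat; nra.
Qed.

Lemma rho_le q z m : 0 < q < 1 -> 0 <= z -> rho q z m <= z ^ 2 * q ^ (2*m+2).
Proof.
  intros Hq Hz. unfold rho.
  powfacts q (2*m+1)%nat. powfacts q (2*m+2)%nat. powfacts q (2*m+3)%nat.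
  assert (0 <= z * q ^ (2*m+2)) by (apply Rmult_le_pos; lra).
  assert (0 <= z * q ^ (2*m+3)) by (apply Rmult_le_pos; lra).
  set (D := (1 + z * q ^ (2*m+2)) * (1 + z * q ^ (2*m+3))).
  assert (1 <= D) by (unfold D; nra).
  assert (0 <= z ^ 2) by (apply pow_le; lra).
  assert (0 <= z ^ 2 * q ^ (2*m+2)) by (apply Rmult_le_pos; lra).
  unfold Rdiv. apply (Rmult_le_reg_r D). lra.
  rewrite Rmult_assoc, Rinv_l by lra. nra.
Qed.

Lemma ex_series_a q z : 0 < q < 1 -> 0 <= z -> ex_series (a q z).
Proof.
  intros Hq Hz.
  destruct (exists_small q (z ^ 2) ltac:(lra) ltac:(apply pow_le; lra)) as [N HN].
  apply (ex_series_ratio _ N).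
  - intros; apply a_nonneg; auto.
  - intros n Hn. rewrite a_succ' by auto.
    pose proof (rho_le q z n Hq Hz). pose proof (a_nonneg q z n Hq Hz).
    assert (q ^ (2*n+2) <= q ^ n) by (apply pow_decr; lia || lra).
    assert (q ^ n * z ^ 2 <= /2) by (apply HN; lia).
    assert (0 <= z^2) by (apply pow_le; lra).
    assert (rho q z n <= /2) by nra.
    nra.
Qed.

Definition A (q z : R) : R := Series (fun m => (-1) ^ m * a q z m).

Lemma ex_series_alt (u : nat -> R) : (forall n, 0 <= u n) -> ex_series u ->
  ex_series (fun n => (-1) ^ n * u n).
Proof.
  intros H0 H1. apply ex_series_Rabs.
  apply (ex_series_ext u). 2: auto.
  intros n. rewrite Rabs_mult, pow_1_abs, Rmult_1_l, Rabs_pos_eq; auto.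
Qed.

Lemma F_le_a q z m : 0 < q < 1 -> 0 <= z -> F q z m <= (1 + z) * a q z m.
Proof.
  intros Hq Hz. unfold a. powfacts q (2*m+1)%nat.
  pose proof (F_nonneg q z m Hq Hz).
  assert (0 <= z * q ^ (2*m+1)) by (apply Rmult_le_pos; lra).
  replace (F q z m) with ((1 + z * q ^ (2*m+1)) * (F q z m / (1 + z * q ^ (2*m+1)))) at 1
    by (field; lra).
  apply Rmult_le_compat_r. apply Rmult_le_pos; auto. apply Rlt_le, Rinv_0_lt_compat; lra.
  nra.
Qed.

Lemma telescope_sum q z N :
  sum_f_R0 (fun m => (-1) ^ m * (F q z m + F q z (S m))) N = 1 + (-1) ^ N * F q z (S N).
Proof.
  induction N.
  - simpl. ring.
  - change (sum_f_R0 (fun m => (-1) ^ m * (F q z m + F q z (S m))) (S N)) with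
      (sum_f_R0 (fun m => (-1) ^ m * (F q z m + F q z (S m))) N +
        (-1) ^ (S N) * (F q z (S N) + F q z (S (S N)))).
    rewrite IHN. simpl pow. cbn [F]. ring.
Qed.

Lemma F_lim q z : 0 < q < 1 -> 0 <= z -> is_lim_seq (fun N => (-1) ^ N * F q z (S N)) 0.
Proof.
  intros Hq Hz. apply is_lim_seq_abs_0.
  apply (is_lim_seq_le_le (fun _ => 0) _ (fun N => (1 + z) * a q z (S N))).
  - intros n. rewrite Rabs_mult, pow_1_abs, Rmult_1_l, Rabs_pos_eq by (apply F_nonneg; auto).
    split. apply F_nonneg; auto. apply F_le_a; auto.
  - apply is_lim_seq_const.
  - replace (Finite 0) with (Rbar_mult (1 + z) 0) by (simpl; f_equal; ring).
    apply is_lim_seq_scal_l.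
    apply (is_lim_seq_incr_1 (a q z)).
    apply ex_series_lim_0, ex_series_a; auto.
Qed.

Lemma telescope_series q z : 0 < q < 1 -> 0 <= z ->
  Series (fun m => (-1) ^ m * (F q z m + F q z (S m))) = 1.
Proof.
  intros Hq Hz. apply is_series_unique.
  apply is_series_Reals.
  apply is_lim_seq_Reals.
  apply (is_lim_seq_ext (fun N => 1 + (-1) ^ N * F q z (S N))).
  { intros; symmetry; apply telescope_sum. }
  replace (Finite 1) with (Rbar_plus 1 0) by (simpl; f_equal; ring).
  apply is_lim_seq_plus'. apply is_lim_seq_const. apply F_lim; auto.
Qed.

Lemma A_FE q z : 0 < q < 1 -> 0 <= z -> A q z + q * z * A q (q * z) = 1.
Proof.
  intros Hq Hz. unfold A.
  assert (Hqz : 0 <= q * z) by (apply Rmult_le_pos; lra).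
  assert (E1 := ex_series_alt _ (fun m => a_nonneg q z m Hq Hz) (ex_series_a q z Hq Hz)).
  assert (E2 := ex_series_alt _ (fun m => a_nonneg q (q*z) m Hq Hqz) (ex_series_a q (q*z) Hq Hqz)).
  rewrite <- Series_scal_l.
  rewrite <- Series_plus; auto.
  2:{ apply (ex_series_scal_l (q * z)) in E2. exact E2. }
  rewrite <- (telescope_series q z Hq Hz).
  apply Series_ext. intros m. rewrite <- a_FE_term by auto. ring.
Qed.

Lemma alt_bounds (u : nat -> R) : (forall n, 0 <= u n) -> (forall n, u (S n) <= u n) ->
  ex_series u ->
  u 0%nat - u 1%nat <= Series (fun n => (-1) ^ n * u n) <= u 0%nat /\
  Series (fun n => (-1) ^ n * u n) <= u 0%nat - u 1%nat + u 2%nat.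
Proof.
  intros H0 Hd Hs.
  assert (Hcv : Un_cv (fun N => sum_f_R0 (tg_alt u) N) (Series (fun n => (-1) ^ n * u n))).
  { assert (Hs' := Series_correct _ (ex_series_alt u H0 Hs)).
    apply is_series_Reals in Hs'. exact Hs'. }
  assert (Hdec : Un_decreasing u) by (intros n; apply Hd).
  assert (H0cv : Un_cv u 0) by (apply is_lim_seq_Reals, ex_series_lim_0; auto).
  pose proof (alternated_series_ineq u _ 0 Hdec H0cv Hcv) as [A1 A2].
  pose proof (alternated_series_ineq u _ 1 Hdec H0cv Hcv) as [B1 B2].
  simpl in A1, A2, B1, B2. unfold tg_alt in *. simpl in *. lra.
Qed.

Definition bb (q z : R) (n : nat) : R := q ^ (n * (n + 1) / 2) * z ^ n.

Lemma theta_alt q z : theta q (- z) = Series (fun n => (-1) ^ n * bb q z n).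
Proof.
  unfold theta. apply Series_ext. intros n. unfold bb.
  replace (- z) with (-1 * z) by ring. rewrite Rpow_mult_distr. ring.
Qed.

Lemma bb_succ q z n : bb q z (S n) = q ^ (S n) * z * bb q z n.
Proof. unfold bb. rewrite tri_succ, pow_add. simpl. ring. Qed.

Lemma bb_nonneg q z n : 0 <= q -> 0 <= z -> 0 <= bb q z n.
Proof. intros. unfold bb. apply Rmult_le_pos; apply pow_le; auto. Qed.

Lemma ex_series_bb q z : 0 <= q < 1 -> ex_series (bb q z).
Proof.
  intros Hq. apply ex_series_Rabs.
  apply (ex_series_ext (fun n => Rabs (b q z n))).
  intros n. reflexivity. apply ex_series_b_abs; auto.
Qed.

Lemma g_FE q z : 0 < q < 1 -> theta q (- z) = 1 - q * z * theta q (- (q * z)).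
Proof.
  intros Hq. rewrite theta_FE by lra.
  replace (q * - z) with (- (q * z)) by ring. ring.
Qed.

Lemma small_bounds q w : 0 < q < 1 -> 0 <= w <= /2 ->
  0 <= theta q (- w) <= 1 /\ 0 <= A q w <= 1.
Proof.
  intros Hq Hw. split.
  - rewrite theta_alt.
    assert (Hd : forall n, bb q w (S n) <= bb q w n).
    { intros n. rewrite bb_succ. pose proof (bb_nonneg q w n ltac:(lra) ltac:(lra)).
      assert (q ^ S n <= 1) by (apply pow_le1; lra).
      assert (0 <= q ^ S n) by (apply pow_le; lra).
      assert (q ^ S n * w <= 1) by nra. nra. }
    destruct (alt_bounds (bb q w)) as [[L U] _].
    + intros; apply bb_nonneg; lra.
    + exact Hd.
    + apply ex_series_bb; lra.
    + specialize (Hd 0%nat). assert (bb q w 0 = 1) by (unfold bb; simpl; ring).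
      split; lra.
  - unfold A.
    assert (Hd : forall n, a q w (S n) <= a q w n).
    { intros n. rewrite a_succ' by lra. pose proof (a_nonneg q w n Hq ltac:(lra)).
      pose proof (rho_le q w n Hq ltac:(lra)). pose proof (rho_nonneg q w n Hq ltac:(lra)).
      assert (q ^ (2*n+2) <= 1) by (apply pow_le1; lra).
      assert (0 <= q ^ (2*n+2)) by (apply pow_le; lra).
      assert (w ^ 2 <= 1) by (simpl; nra).
      assert (0 <= w ^ 2) by (apply pow_le; lra).
      assert (rho q w n <= 1) by nra. nra. }
    destruct (alt_bounds (a q w)) as [[L U] _].
    + intros; apply a_nonneg; lra.
    + exact Hd.
    + apply ex_series_a; lra.
    + specialize (Hd 0%nat).
      assert (a q w 0 <= 1).
      { unfold a. cbn [F]. assert (0 <= w * q ^ (2*0+1)) by (apply Rmult_le_pos; [lra| apply pow_le; lra]).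
        unfold Rdiv. rewrite Rmult_1_l. rewrite <- Rinv_1. apply Rinv_le_contravar; lra. }
      split; lra.
Qed.

Lemma D_FE q z : 0 < q < 1 -> 0 <= z ->
  theta q (- z) - A q z = - (q * z) * (theta q (- (q * z)) - A q (q * z)).
Proof.
  intros Hq Hz. rewrite g_FE by auto.
  pose proof (A_FE q z Hq Hz). lra.
Qed.

Lemma D_zero_small q : 0 < q < 1 -> forall w, 0 <= w <= /2 -> theta q (- w) = A q w.
Proof.
  intros Hq.
  assert (H : forall n w, 0 <= w <= /2 -> Rabs (theta q (- w) - A q w) <= (/2) ^ n).
  { induction n; intros w Hw.
    - simpl. destruct (small_bounds q w Hq Hw) as [[? ?] [? ?]].
      apply Rabs_le. lra.
    - rewrite D_FE by lra. rewrite Rabs_mult, Rabs_Ropp.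
      assert (0 <= q * w) by (apply Rmult_le_pos; lra).
      rewrite (Rabs_pos_eq (q*w)) by lra.
      assert (Hqw : 0 <= q * w <= /2) by nra.
      specialize (IHn _ Hqw). simpl.
      assert (q * w <= /2) by nra.
      pose proof (Rabs_pos (theta q (- (q * w)) - A q (q * w))).
      nra. }
  intros w Hw.
  destruct (Req_dec (theta q (- w) - A q w) 0) as [E|E]; [lra|].
  exfalso.
  assert (Hp : 0 < Rabs (theta q (- w) - A q w)) by (apply Rabs_pos_lt; auto).
  destruct (pow_lt_1_zero (/2) ltac:(rewrite Rabs_pos_eq; lra) _ Hp) as [N HN].
  specialize (HN N (le_n N)). rewrite Rabs_pos_eq in HN by (apply pow_le; lra).
  specialize (H N w Hw). lra.
Qed.

Lemma theta_eq_A q z : 0 < q < 1 -> 0 <= z -> theta q (- z) = A q z.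
Proof.
  intros Hq Hz.
  assert (H : forall n w, 0 <= w -> q ^ n * w <= /2 -> theta q (- w) = A q w).
  { induction n; intros w Hw Hn.
    - apply D_zero_small; auto. simpl in Hn. lra.
    - assert (0 <= q * w) by (apply Rmult_le_pos; lra).
      assert (E : theta q (- (q*w)) = A q (q*w)).
      { apply IHn; auto. simpl in Hn. lra. }
      pose proof (D_FE q w Hq Hw). rewrite E in H0. lra. }
  destruct (exists_small q z ltac:(lra) Hz) as [N HN].
  apply (H N); auto.
Qed.

Lemma cubic_pos q : 0 < q < 1 -> 0 < 4 - 1296/100*q + 112/10*q^2 - q^3.
Proof.
  intros Hq. pose proof (pow2_ge_0 (q - 634/1000)).
  assert (0 <= (q - 634/1000)^2 * (1 - q)) by (apply Rmult_le_pos; nra).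
  nra.
Qed.

Lemma quad_pos q z u : 0 < q < 1 -> 0 <= z <= 46/10 -> 0 <= u ->
  0 < (q^2 + 1) * u^2 + q * (1 + q - z) * u + q.
Proof.
  intros Hq Hz Hu.
  pose proof (cubic_pos q Hq).
  assert (Hsq : (z - 1 - q)^2 <= (36/10 - q)^2).
  { assert (-(36/10 - q) <= z - 1 - q <= 36/10 - q) by lra.
    nra. }
  assert (Hd : 0 < 4 * (q^2 + 1) - q * (z - 1 - q)^2).
  { assert (q * (z - 1 - q)^2 <= q * (36/10 - q)^2) by (apply Rmult_le_compat_l; lra).
    nra. }
  assert (E : 4 * (q^2+1) * ((q^2 + 1) * u^2 + q * (1 + q - z) * u + q) =
    (2 * (q^2+1) * u + q * (1 + q - z))^2 + q * (4 * (q^2 + 1) - q * (z - 1 - q)^2)) by ring.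
  assert (0 < q * (4 * (q^2 + 1) - q * (z - 1 - q)^2)) by (apply Rmult_lt_0_compat; lra).
  pose proof (pow2_ge_0 (2 * (q^2+1) * u + q * (1 + q - z))).
  assert (0 < 4 * (q^2+1)) by nra.
  nra.
Qed.

Lemma rho_lt1 q z m : 0 < q < 1 -> 0 <= z <= 46/10 -> rho q z m < 1.
Proof.
  intros Hq Hz. unfold rho.
  destruct (pow_u q m) as [E1 [E2 [E3 _]]].
  rewrite E1, E2, E3.
  set (v := q ^ (2*m)). assert (0 < v) by (apply pow_lt; lra).
  assert (v <= 1) by (apply pow_le1; lra).
  set (t := v * q).
  assert (0 < t) by (unfold t; nra). assert (t <= 1) by (unfold t; nra).
  replace (v * (q * q)) with (t * q) by (unfold t; ring).
  replace (v * (q * q * q)) with (t * (q * q)) by (unfold t; ring).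
  set (u := z * t * q).
  assert (0 <= u) by (unfold u; repeat apply Rmult_le_pos; lra).
  pose proof (quad_pos q z u Hq Hz ltac:(lra)).
  assert (0 <= z * (t * q)) by (repeat apply Rmult_le_pos; lra).
  assert (0 <= z * (t * (q * q))) by (repeat apply Rmult_le_pos; lra).
  assert (Hden : 0 < (1 + z * (t * q)) * (1 + z * (t * (q * q)))) by (apply Rmult_lt_0_compat; lra).
  apply (Rmult_lt_reg_r ((1 + z * (t * q)) * (1 + z * (t * (q * q))))); auto.
  unfold Rdiv. rewrite Rmult_assoc, Rinv_l by lra. rewrite Rmult_1_r, Rmult_1_l.
  apply (Rmult_lt_reg_l q). lra.
  assert (E : q * ((1 + z * (t * q)) * (1 + z * (t * (q * q)))) - q * ((1 - t) * (t * q) * z ^ 2)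
     = (q^2 + 1) * u^2 + q * (1 + q - z) * u + q) by (unfold u; ring).
  lra.
Qed.

Lemma A_pos_c1 q z : 0 < q < 1 -> 0 <= z <= 46/10 -> 0 < A q z.
Proof.
  intros Hq Hz. unfold A.
  assert (Hd : forall n, a q z (S n) <= a q z n).
  { intros n. rewrite a_succ' by lra. pose proof (a_nonneg q z n Hq ltac:(lra)).
    pose proof (rho_lt1 q z n Hq Hz). pose proof (rho_nonneg q z n Hq ltac:(lra)). nra. }
  destruct (alt_bounds (a q z)) as [[L U] _].
  + intros; apply a_nonneg; lra.
  + exact Hd.
  + apply ex_series_a; lra.
  + rewrite a_succ' in L by lra.
    pose proof (rho_lt1 q z 0 Hq Hz).
    assert (0 < a q z 0).
    { unfold a. cbn [F]. assert (0 <= z * q ^ (2*0+1)) by (apply Rmult_le_pos; [lra| apply pow_le; lra]).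
      apply Rmult_lt_0_compat. lra. apply Rinv_0_lt_compat. lra. }
    nra.
Qed.

Lemma rho0_eq q w : rho q w 0 = (1 - q^1) * q^2 * w^2 / ((1 + w * q^2) * (1 + w * q^3)).
Proof. reflexivity. Qed.
Lemma rho1_eq q w : rho q w 1 = (1 - q^3) * q^4 * w^2 / ((1 + w * q^4) * (1 + w * q^5)).
Proof. reflexivity. Qed.

Lemma frac_le a a' b b' : 0 <= a <= a' -> 0 < b' <= b -> a / b <= a' / b'.
Proof.
  intros Ha Hb. unfold Rdiv.
  apply Rmult_le_compat; try lra.
  apply Rlt_le, Rinv_0_lt_compat; lra.
  apply Rinv_le_contravar; lra.
Qed.

Lemma c2_upper q z : 0 < q < 1 -> 0 <= q * z <= 46/10 ->
  theta q (- z) >= 1 - (q * z) / (1 + q * z * q) * (1 - rho q (q*z) 0 * (1 - rho q (q*z) 1)).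
Proof.
  intros Hq Hw. rewrite g_FE by auto. rewrite theta_eq_A by lra.
  set (w := q * z) in *.
  assert (Hd : forall n, a q w (S n) <= a q w n).
  { intros n. rewrite a_succ' by lra. pose proof (a_nonneg q w n Hq ltac:(lra)).
    pose proof (rho_lt1 q w n Hq Hw). pose proof (rho_nonneg q w n Hq ltac:(lra)). nra. }
  destruct (alt_bounds (a q w)) as [_ U].
  + intros; apply a_nonneg; lra.
  + exact Hd.
  + apply ex_series_a; lra.
  + fold (A q w) in U.
    rewrite a_succ', a_succ', a_succ' in U by lra.
    assert (Ea : a q w 0 = 1 / (1 + w * q)).
    { unfold a. cbn [F]. simpl. f_equal. ring. }
    rewrite Ea in U.
    assert (A q w <= 1 / (1 + w * q) * (1 - rho q w 0 * (1 - rho q w 1))) by lra.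
    assert (0 <= w) by lra.
    apply Rle_ge.
    assert (E : w / (1 + w * q) * (1 - rho q w 0 * (1 - rho q w 1)) =
               w * (1 / (1 + w * q) * (1 - rho q w 0 * (1 - rho q w 1)))).
    { field. assert (0 <= w * q) by (apply Rmult_le_pos; lra). lra. }
    rewrite E. apply Rplus_le_compat_l, Ropp_le_contravar.
    apply Rmult_le_compat_l; lra.
Qed.

Definition Nfun q w := 1 - w * (1 - q) + w * rho q w 0 * (1 - rho q w 1).

Lemma c2_reduce q z : 0 < q < 1 -> 0 <= q * z <= 46/10 -> 0 < Nfun q (q * z) -> 0 < theta q (- z).
Proof.
  intros Hq Hw HN. pose proof (c2_upper q z Hq Hw).
  set (w := q * z) in *.
  assert (0 <= w * q) by (apply Rmult_le_pos; lra).
  assert (E : 1 - w / (1 + w * q) * (1 - rho q w 0 * (1 - rho q w 1)) = Nfun q w / (1 + w * q)).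
  { unfold Nfun. field. lra. }
  replace (q * z * q) with (w * q) in H by (unfold w; ring).
  rewrite E in H.
  assert (0 < Nfun q w / (1 + w * q)) by (apply Rdiv_lt_0_compat; lra).
  lra.
Qed.

Lemma caseA q w : 0 < q < 1 -> 0 <= w <= 46/10 -> w * (1 - q) < 1 -> 0 < Nfun q w.
Proof.
  intros Hq Hw H. unfold Nfun.
  pose proof (rho_lt1 q w 1 Hq Hw). pose proof (rho_nonneg q w 0 Hq ltac:(lra)).
  assert (0 <= w * rho q w 0 * (1 - rho q w 1)).
  { apply Rmult_le_pos. apply Rmult_le_pos; lra. lra. }
  lra.
Qed.

Definition L0lo q1 q2 := (1 - q2) * q1^2 * (46/10 * q1)^3 / ((1 + 5 * q2 * q2^2) * (1 + 5 * q2 * q2^3)).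
Definition U1hi q1 q2 := (1 - q1^3) * q2^4 * (5 * q2)^2 / ((1 + 46/10 * q1 * q1^4) * (1 + 46/10 * q1 * q1^5)).
Definition Gb q1 q2 := 1 - 5 * q2 * (1 - q1) + L0lo q1 q2 * (1 - U1hi q1 q2).

Lemma mul3_le a1 a2 a3 b1 b2 b3 : 0 <= a1 <= b1 -> 0 <= a2 <= b2 -> 0 <= a3 <= b3 ->
  0 <= a1 * a2 * a3 <= b1 * b2 * b3.
Proof.
  intros. split. repeat apply Rmult_le_pos; lra.
  apply Rmult_le_compat; try lra. apply Rmult_le_pos; lra.
  apply Rmult_le_compat; lra.
Qed.

Lemma mul2_le a1 a2 b1 b2 : 0 <= a1 <= b1 -> 0 <= a2 <= b2 -> 0 <= a1 * a2 <= b1 * b2.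
Proof. intros. split. apply Rmult_le_pos; lra. apply Rmult_le_compat; lra. Qed.

Lemma pow_mono x y n : 0 <= x <= y -> 0 <= x ^ n <= y ^ n.
Proof. intros. split. apply pow_le; lra. apply pow_incr; lra. Qed.

Lemma caseB q1 q2 q z : 0 < q1 -> q1 <= q <= q2 -> q2 < 1 -> 46/10 <= z <= 5 ->
  0 <= 1 - U1hi q1 q2 -> 0 < Gb q1 q2 -> 0 < Nfun q (q * z).
Proof.
  intros H1 Hq H2 Hz HU HG. unfold Nfun, Gb in *.
  set (w := q * z).
  assert (Hw1 : 46/10 * q <= w <= 5 * q) by (unfold w; nra).
  assert (0 < q) by lra.
  assert (Hp : forall n, 0 <= q1 ^ n <= q ^ n) by (intros; apply pow_mono; lra).
  assert (Hp' : forall n, 0 <= q ^ n <= q2 ^ n) by (intros; apply pow_mono; lra).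
  assert (HL : L0lo q1 q2 <= w * rho q w 0).
  { rewrite rho0_eq. unfold L0lo.
    assert (0 <= w * q^2) by (apply Rmult_le_pos; [lra| apply pow_le; lra]).
    assert (0 <= w * q^3) by (apply Rmult_le_pos; [lra| apply pow_le; lra]).
    replace (w * ((1 - q ^ 1) * q ^ 2 * w ^ 2 / ((1 + w * q ^ 2) * (1 + w * q ^ 3))))
      with ((1 - q) * q^2 * w^3 / ((1 + w * q ^ 2) * (1 + w * q ^ 3))) by (field; neq0; lra).
    apply frac_le.
    - apply mul3_le. lra. apply Hp. apply pow_mono. lra.
    - split. apply Rmult_lt_0_compat; lra.
      apply mul2_le; split; try lra.
      + apply Rplus_le_compat_l. apply Rmult_le_compat; try lra. apply pow_le; lra. apply Hp'.
      + apply Rplus_le_compat_l. apply Rmult_le_compat; try lra. apply pow_le; lra. apply Hp'. }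
  assert (HU1 : rho q w 1 <= U1hi q1 q2).
  { rewrite rho1_eq. unfold U1hi.
    assert (0 <= w * q^4) by (apply Rmult_le_pos; [lra| apply pow_le; lra]).
    assert (0 <= w * q^5) by (apply Rmult_le_pos; [lra| apply pow_le; lra]).
    assert (q^3 <= 1) by (apply pow_le1; lra).
    apply frac_le.
    - apply mul3_le. pose proof (Hp 3%nat). lra. apply Hp'. apply pow_mono. lra.
    - split.
      + apply Rmult_lt_0_compat.
        * assert (0 <= 46/10 * q1 * q1^4) by (repeat apply Rmult_le_pos; try lra; apply pow_le; lra). lra.
        * assert (0 <= 46/10 * q1 * q1^5) by (repeat apply Rmult_le_pos; try lra; apply pow_le; lra). lra.
      + apply mul2_le; split.
        * assert (0 <= 46/10 * q1 * q1^4) by (repeat apply Rmult_le_pos; try lra; apply pow_le; lra). lra.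
        * apply Rplus_le_compat_l. apply Rmult_le_compat; try (apply Rmult_le_pos; lra). apply Hp. nra. apply Hp.
        * assert (0 <= 46/10 * q1 * q1^5) by (repeat apply Rmult_le_pos; try lra; apply pow_le; lra). lra.
        * apply Rplus_le_compat_l. apply Rmult_le_compat; try (apply Rmult_le_pos; lra). apply Hp. nra. apply Hp. }
  assert (0 <= L0lo q1 q2).
  { unfold L0lo. apply Rmult_le_pos.
    - repeat apply Rmult_le_pos; try lra; apply pow_le; lra.
    - apply Rlt_le, Rinv_0_lt_compat.
      pose proof (pow_le q2 2 ltac:(lra)). pose proof (pow_le q2 3 ltac:(lra)).
      apply Rmult_lt_0_compat; nra. }
  assert (w * (1 - q) <= 5 * q2 * (1 - q1)) by nra.
  assert (L0lo q1 q2 * (1 - U1hi q1 q2) <= w * rho q w 0 * (1 - rho q w 1)).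
  { apply Rmult_le_compat; lra. }
  lra.
Qed.

Lemma caseB_all q z : 27/100 <= q <= 73/100 -> 46/10 <= z <= 5 -> 0 < Nfun q (q * z).
Proof.
  intros Hq Hz.
  destruct (Rle_lt_dec q (28/100)). { apply (caseB (27/100) (28/100)); [lra|lra|lra|lra|unfold U1hi; lra|unfold Gb, L0lo, U1hi; lra]. }
  destruct (Rle_lt_dec q (29/100)). { apply (caseB (28/100) (29/100)); [lra|lra|lra|lra|unfold U1hi; lra|unfold Gb, L0lo, U1hi; lra]. }
  destruct (Rle_lt_dec q (30/100)). { apply (caseB (29/100) (30/100)); [lra|lra|lra|lra|unfold U1hi; lra|unfold Gb, L0lo, U1hi; lra]. }
  destruct (Rle_lt_dec q (31/100)). { apply (caseB (30/100) (31/100)); [lra|lra|lra|lra|unfold U1hi; lra|unfold Gb, L0lo, U1hi; lra]. }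
  destruct (Rle_lt_dec q (32/100)). { apply (caseB (31/100) (32/100)); [lra|lra|lra|lra|unfold U1hi; lra|unfold Gb, L0lo, U1hi; lra]. }
  destruct (Rle_lt_dec q (33/100)). { apply (caseB (32/100) (33/100)); [lra|lra|lra|lra|unfold U1hi; lra|unfold Gb, L0lo, U1hi; lra]. }
  destruct (Rle_lt_dec q (34/100)). { apply (caseB (33/100) (34/100)); [lra|lra|lra|lra|unfold U1hi; lra|unfold Gb, L0lo, U1hi; lra]. }
  destruct (Rle_lt_dec q (35/100)). { apply (caseB (34/100) (35/100)); [lra|lra|lra|lra|unfold U1hi; lra|unfold Gb, L0lo, U1hi; lra]. }
  destruct (Rle_lt_dec q (36/100)). { apply (caseB (35/100) (36/100)); [lra|lra|lra|lra|unfold U1hi; lra|unfold Gb, L0lo, U1hi; lra]. }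
  destruct (Rle_lt_dec q (37/100)). { apply (caseB (36/100) (37/100)); [lra|lra|lra|lra|unfold U1hi; lra|unfold Gb, L0lo, U1hi; lra]. }
  destruct (Rle_lt_dec q (38/100)). { apply (caseB (37/100) (38/100)); [lra|lra|lra|lra|unfold U1hi; lra|unfold Gb, L0lo, U1hi; lra]. }
  destruct (Rle_lt_dec q (39/100)). { apply (caseB (38/100) (39/100)); [lra|lra|lra|lra|unfold U1hi; lra|unfold Gb, L0lo, U1hi; lra]. }
  destruct (Rle_lt_dec q (40/100)). { apply (caseB (39/100) (40/100)); [lra|lra|lra|lra|unfold U1hi; lra|unfold Gb, L0lo, U1hi; lra]. }
  destruct (Rle_lt_dec q (41/100)). { apply (caseB (40/100) (41/100)); [lra|lra|lra|lra|unfold U1hi; lra|unfold Gb, L0lo, U1hi; lra]. }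
  destruct (Rle_lt_dec q (42/100)). { apply (caseB (41/100) (42/100)); [lra|lra|lra|lra|unfold U1hi; lra|unfold Gb, L0lo, U1hi; lra]. }
  destruct (Rle_lt_dec q (43/100)). { apply (caseB (42/100) (43/100)); [lra|lra|lra|lra|unfold U1hi; lra|unfold Gb, L0lo, U1hi; lra]. }
  destruct (Rle_lt_dec q (44/100)). { apply (caseB (43/100) (44/100)); [lra|lra|lra|lra|unfold U1hi; lra|unfold Gb, L0lo, U1hi; lra]. }
  destruct (Rle_lt_dec q (45/100)). { apply (caseB (44/100) (45/100)); [lra|lra|lra|lra|unfold U1hi; lra|unfold Gb, L0lo, U1hi; lra]. }
  destruct (Rle_lt_dec q (46/100)). { apply (caseB (45/100) (46/100)); [lra|lra|lra|lra|unfold U1hi; lra|unfold Gb, L0lo, U1hi; lra]. }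
  destruct (Rle_lt_dec q (47/100)). { apply (caseB (46/100) (47/100)); [lra|lra|lra|lra|unfold U1hi; lra|unfold Gb, L0lo, U1hi; lra]. }
  destruct (Rle_lt_dec q (48/100)). { apply (caseB (47/100) (48/100)); [lra|lra|lra|lra|unfold U1hi; lra|unfold Gb, L0lo, U1hi; lra]. }
  destruct (Rle_lt_dec q (49/100)). { apply (caseB (48/100) (49/100)); [lra|lra|lra|lra|unfold U1hi; lra|unfold Gb, L0lo, U1hi; lra]. }
  destruct (Rle_lt_dec q (50/100)). { apply (caseB (49/100) (50/100)); [lra|lra|lra|lra|unfold U1hi; lra|unfold Gb, L0lo, U1hi; lra]. }
  destruct (Rle_lt_dec q (51/100)). { apply (caseB (50/100) (51/100)); [lra|lra|lra|lra|unfold U1hi; lra|unfold Gb, L0lo, U1hi; lra]. }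
  destruct (Rle_lt_dec q (52/100)). { apply (caseB (51/100) (52/100)); [lra|lra|lra|lra|unfold U1hi; lra|unfold Gb, L0lo, U1hi; lra]. }
  destruct (Rle_lt_dec q (53/100)). { apply (caseB (52/100) (53/100)); [lra|lra|lra|lra|unfold U1hi; lra|unfold Gb, L0lo, U1hi; lra]. }
  destruct (Rle_lt_dec q (54/100)). { apply (caseB (53/100) (54/100)); [lra|lra|lra|lra|unfold U1hi; lra|unfold Gb, L0lo, U1hi; lra]. }
  destruct (Rle_lt_dec q (55/100)). { apply (caseB (54/100) (55/100)); [lra|lra|lra|lra|unfold U1hi; lra|unfold Gb, L0lo, U1hi; lra]. }
  destruct (Rle_lt_dec q (56/100)). { apply (caseB (55/100) (56/100)); [lra|lra|lra|lra|unfold U1hi; lra|unfold Gb, L0lo, U1hi; lra]. }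
  destruct (Rle_lt_dec q (57/100)). { apply (caseB (56/100) (57/100)); [lra|lra|lra|lra|unfold U1hi; lra|unfold Gb, L0lo, U1hi; lra]. }
  destruct (Rle_lt_dec q (58/100)). { apply (caseB (57/100) (58/100)); [lra|lra|lra|lra|unfold U1hi; lra|unfold Gb, L0lo, U1hi; lra]. }
  destruct (Rle_lt_dec q (59/100)). { apply (caseB (58/100) (59/100)); [lra|lra|lra|lra|unfold U1hi; lra|unfold Gb, L0lo, U1hi; lra]. }
  destruct (Rle_lt_dec q (60/100)). { apply (caseB (59/100) (60/100)); [lra|lra|lra|lra|unfold U1hi; lra|unfold Gb, L0lo, U1hi; lra]. }
  destruct (Rle_lt_dec q (61/100)). { apply (caseB (60/100) (61/100)); [lra|lra|lra|lra|unfold U1hi; lra|unfold Gb, L0lo, U1hi; lra]. }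
  destruct (Rle_lt_dec q (62/100)). { apply (caseB (61/100) (62/100)); [lra|lra|lra|lra|unfold U1hi; lra|unfold Gb, L0lo, U1hi; lra]. }
  destruct (Rle_lt_dec q (63/100)). { apply (caseB (62/100) (63/100)); [lra|lra|lra|lra|unfold U1hi; lra|unfold Gb, L0lo, U1hi; lra]. }
  destruct (Rle_lt_dec q (64/100)). { apply (caseB (63/100) (64/100)); [lra|lra|lra|lra|unfold U1hi; lra|unfold Gb, L0lo, U1hi; lra]. }
  destruct (Rle_lt_dec q (65/100)). { apply (caseB (64/100) (65/100)); [lra|lra|lra|lra|unfold U1hi; lra|unfold Gb, L0lo, U1hi; lra]. }
  destruct (Rle_lt_dec q (66/100)). { apply (caseB (65/100) (66/100)); [lra|lra|lra|lra|unfold U1hi; lra|unfold Gb, L0lo, U1hi; lra]. }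
  destruct (Rle_lt_dec q (67/100)). { apply (caseB (66/100) (67/100)); [lra|lra|lra|lra|unfold U1hi; lra|unfold Gb, L0lo, U1hi; lra]. }
  destruct (Rle_lt_dec q (68/100)). { apply (caseB (67/100) (68/100)); [lra|lra|lra|lra|unfold U1hi; lra|unfold Gb, L0lo, U1hi; lra]. }
  destruct (Rle_lt_dec q (69/100)). { apply (caseB (68/100) (69/100)); [lra|lra|lra|lra|unfold U1hi; lra|unfold Gb, L0lo, U1hi; lra]. }
  destruct (Rle_lt_dec q (70/100)). { apply (caseB (69/100) (70/100)); [lra|lra|lra|lra|unfold U1hi; lra|unfold Gb, L0lo, U1hi; lra]. }
  destruct (Rle_lt_dec q (71/100)). { apply (caseB (70/100) (71/100)); [lra|lra|lra|lra|unfold U1hi; lra|unfold Gb, L0lo, U1hi; lra]. }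
  destruct (Rle_lt_dec q (72/100)). { apply (caseB (71/100) (72/100)); [lra|lra|lra|lra|unfold U1hi; lra|unfold Gb, L0lo, U1hi; lra]. }
  apply (caseB (72/100) (73/100)); [lra|lra|lra|lra|unfold U1hi; lra|unfold Gb, L0lo, U1hi; lra].
Qed.

Fixpoint prodR (f : nat -> R) (n : nat) : R :=
  match n with O => 1 | S n => prodR f n * f n end.

Lemma prodR_shift g n : prodR g (S n) = g 0%nat * prodR (fun i => g (S i)) n.
Proof.
  induction n.
  - simpl. ring.
  - change (prodR g (S (S n))) with (prodR g (S n) * g (S n)).
    rewrite IHn. simpl. ring.
Qed.

Lemma prodR_ext f g n : (forall i, f i = g i) -> prodR f n = prodR g n.
Proof. intros H. induction n; simpl; auto. rewrite IHn, H. auto. Qed.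

Lemma prodR_mult f g n : prodR (fun i => f i * g i) n = prodR f n * prodR g n.
Proof. induction n; simpl. ring. rewrite IHn. ring. Qed.

Lemma prodR_nonneg f n : (forall i, 0 <= f i) -> 0 <= prodR f n.
Proof. intros H. induction n; simpl. lra. apply Rmult_le_pos; auto. Qed.

Lemma prodR_le f g n : (forall i, 0 <= f i <= g i) -> prodR f n <= prodR g n.
Proof.
  intros H. induction n; simpl. lra.
  apply Rmult_le_compat; auto. apply prodR_nonneg; intros; apply H. apply H. apply H.
Qed.

Lemma prodR_le1 f n : (forall i, 0 <= f i <= 1) -> prodR f n <= 1.
Proof.
  intros H. induction n; simpl. lra.
  assert (0 <= prodR f n) by (apply prodR_nonneg; intros; apply H).
  specialize (H n). nra.
Qed.

Definition Yq q m := prodR (fun i => 1 - q ^ (2 * (m + 1 + i))) m.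
Definition Eq q m := prodR (fun k => (1 - q ^ (2*k+1)) * ((1 + q ^ (2*k+1)) * (1 + q ^ (2*k+2)))) m.

Lemma Yq_succ q m : 0 < q < 1 ->
  Yq q (S m) = Yq q m * (1 - q ^ (2 * (2*m+1))) * (1 + q ^ (2 * (m+1))).
Proof.
  intros Hq. unfold Yq.
  set (g := fun i => 1 - q ^ (2 * (m + 1 + i))).
  assert (H1 : prodR (fun i => 1 - q ^ (2 * (S m + 1 + i))) (S m) = prodR (fun i => g (S i)) (S m)).
  { apply prodR_ext. intros i. unfold g. replace (S m + 1 + i)%nat with (m + 1 + S i)%nat by lia. reflexivity. }
  assert (H2 : g 0%nat * prodR (fun i => g (S i)) (S m) = prodR g m * g m * g (S m)).
  { rewrite <- prodR_shift. reflexivity. }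
  assert (Hg0 : g 0%nat = 1 - q ^ (2 * (m+1))) by (unfold g; replace (m+1+0)%nat with (m+1)%nat by lia; reflexivity).
  assert (Hgm : g m = 1 - q ^ (2 * (2*m+1))) by (unfold g; replace (m+1+m)%nat with (2*m+1)%nat by lia; reflexivity).
  assert (HgS : g (S m) = 1 - q ^ (2 * (m+1)) * q ^ (2 * (m+1))).
  { unfold g. rewrite <- pow_add. replace (2 * (m + 1 + S m))%nat with (2 * (m + 1) + 2 * (m + 1))%nat by lia. reflexivity. }
  rewrite H1. fold g.
  assert (0 < q ^ (2 * (m+1)) < 1).
  { split. apply pow_lt; lra. apply pow_lt_1_compat. lra. lia. }
  rewrite Hg0, Hgm, HgS in H2.
  apply (Rmult_eq_reg_l (1 - q ^ (2 * (m+1)))). 2: lra.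
  rewrite H2. ring.
Qed.

Lemma Eq_Yq q m : 0 < q < 1 -> Eq q m = Yq q m.
Proof.
  intros Hq. induction m.
  - reflexivity.
  - change (Eq q (S m)) with (Eq q m * ((1 - q^(2*m+1)) * ((1 + q^(2*m+1)) * (1 + q^(2*m+2))))).
    rewrite IHm, Yq_succ by auto.
    replace (2 * (2*m+1))%nat with ((2*m+1) + (2*m+1))%nat by lia.
    replace (2 * (m+1))%nat with (2*m+2)%nat by lia.
    rewrite (pow_add q (2*m+1) (2*m+1)). ring.
Qed.

Lemma Eq_le1 q m : 0 < q < 1 -> Eq q m <= 1.
Proof.
  intros Hq. rewrite Eq_Yq by auto. unfold Yq. apply prodR_le1.
  intros i. assert (0 <= q ^ (2 * (m + 1 + i)) <= 1) by (split; [apply pow_le; lra| apply pow_le1; lra]).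
  lra.
Qed.

Lemma a_prod q z m : 0 < q < 1 -> 0 <= z -> a q z m = a q z 0 * prodR (rho q z) m.
Proof.
  intros Hq Hz. induction m. simpl. ring.
  rewrite a_succ' by auto. rewrite IHm. simpl. ring.
Qed.

Definition Gk q z k := q ^ (2*k+2) * z ^ 2 / ((1 + z * q ^ (2*k+2)) * (1 + z * q ^ (2*k+3))).
Definition Mk q k := (1 + q ^ (2*k+1)) * (1 + q ^ (2*k+2)).
Definition fk q z k := Gk q z k / Mk q k.

Lemma prod_rho_le q z m : 0 < q < 1 -> 0 <= z -> prodR (rho q z) m <= prodR (fk q z) m.
Proof.
  intros Hq Hz.
  assert (E : prodR (rho q z) m = Eq q m * prodR (fk q z) m).
  { unfold Eq. rewrite <- prodR_mult. apply prodR_ext. intros k.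
    unfold rho, fk, Gk, Mk.
    powfacts q (2*k+1)%nat. powfacts q (2*k+2)%nat. powfacts q (2*k+3)%nat.
    assert (0 <= z * q ^ (2*k+2)) by (apply Rmult_le_pos; lra).
    assert (0 <= z * q ^ (2*k+3)) by (apply Rmult_le_pos; lra).
    field. neq0; lra. }
  rewrite E.
  assert (0 <= prodR (fk q z) m).
  { apply prodR_nonneg. intros k. unfold fk, Gk, Mk.
    powfacts q (2*k+1)%nat. powfacts q (2*k+2)%nat. powfacts q (2*k+3)%nat.
    assert (0 <= z * q ^ (2*k+2)) by (apply Rmult_le_pos; lra).
    assert (0 <= z * q ^ (2*k+3)) by (apply Rmult_le_pos; lra).
    apply Rmult_le_pos. apply Rmult_le_pos. apply Rmult_le_pos; [lra|apply pow_le; lra].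
    apply Rlt_le, Rinv_0_lt_compat. apply Rmult_lt_0_compat; lra.
    apply Rlt_le, Rinv_0_lt_compat. apply Rmult_lt_0_compat; lra. }
  pose proof (Eq_le1 q m Hq).
  assert (0 <= Eq q m).
  { unfold Eq. apply prodR_nonneg. intros k.
    powfacts q (2*k+1)%nat. powfacts q (2*k+2)%nat.
    apply Rmult_le_pos. lra. apply Rmult_le_pos; lra. }
  nra.
Qed.

Definition phi (t : R) := 25 * t / ((1 + t)^2 * (1 + 5 * t) * (1 + 45/10 * t)).

Lemma fk_le_phi q z k : 9/10 <= q < 1 -> 0 <= z <= 5 -> 0 <= fk q z k <= phi (q ^ (2*k+2)).
Proof.
  intros Hq Hz. unfold fk, Gk, Mk, phi.
  set (t := q ^ (2*k+2)).
  assert (Ht : 0 < t <= 1) by (split; [apply pow_lt; lra| apply pow_le1; lra]).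
  assert (E1 : q ^ (2*k+1) >= t).
  { apply Rle_ge. apply pow_decr; lra || lia. }
  assert (E3 : q ^ (2*k+3) = t * q) by (unfold t; replace (2*k+3)%nat with (S (2*k+2)) by lia; simpl; ring).
  rewrite E3.
  assert (0 <= z * t) by (apply Rmult_le_pos; lra).
  assert (0 <= z * (t * q)) by (apply Rmult_le_pos; [lra| apply Rmult_le_pos; lra]).
  assert (0 <= z * t * z) by (apply Rmult_le_pos; lra).
  split.
  - apply Rmult_le_pos. apply Rmult_le_pos. apply Rmult_le_pos; [lra|apply pow_le; lra].
    apply Rlt_le, Rinv_0_lt_compat. apply Rmult_lt_0_compat; lra.
    apply Rlt_le, Rinv_0_lt_compat. apply Rmult_lt_0_compat; lra.
  - assert (K1 : t * z ^ 2 / ((1 + z * t) * (1 + z * (t * q))) <= 25 * t / ((1 + 5 * t) * (1 + 45/10 * t))).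
    { apply (Rmult_le_reg_r ((1 + z * t) * (1 + z * (t * q)) * ((1 + 5 * t) * (1 + 45/10 * t)))).
      apply Rmult_lt_0_compat; apply Rmult_lt_0_compat; lra.
      field_simplify; [| split; apply Rgt_not_eq; apply Rlt_gt; lra | split; apply Rgt_not_eq; apply Rlt_gt; lra].
      assert (0 <= z * t * (z * t)) by (apply Rmult_le_pos; lra).
      assert (z * (t * q) >= 9/10 * (z * t)) by nra.
      assert (z * z <= 25) by nra.
      assert (t * z * z * (1 + 5 * t) * (1 + 45/10 * t) <= 25 * t * (1 + z * t) * (1 + 9/10 * (z * t))).
      { assert (0 <= t * (25 - z * z)) by (apply Rmult_le_pos; lra).
        assert (0 <= t * t * z * (5 - z)) by (repeat apply Rmult_le_pos; lra).
        nra. }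
      nra. }
    replace (25 * t / ((1 + t) ^ 2 * (1 + 5 * t) * (1 + 45 / 10 * t))) with
      ((25 * t / ((1 + 5 * t) * (1 + 45/10 * t))) / ((1 + t) ^ 2)) by (field; neq0; lra).
    apply frac_le.
    + split; [|exact K1].
      apply Rmult_le_pos. apply Rmult_le_pos; [lra|apply pow_le; lra].
      apply Rlt_le, Rinv_0_lt_compat. apply Rmult_lt_0_compat; lra.
    + split. apply pow_lt; lra. replace ((1+t)^2) with ((1+t)*(1+t)) by ring. apply Rmult_le_compat_r; lra.
Qed.

Definition Bn (m : nat) := prodR (fun k => phi ((9/10) ^ (2*k+2))) m.

Lemma total_lt1 : Bn 1 + Bn 2 + Bn 3 + Bn 4 + Bn 5 + Bn 6 + Bn 7 / (1 - 975/1000) < 1.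
Proof.
  unfold Bn. cbn [prodR]. unfold phi. simpl Nat.mul. simpl Nat.add. lra.
Qed.

Lemma phi_nonneg t : 0 <= t -> 0 <= phi t.
Proof.
  intros. unfold phi. apply Rmult_le_pos. lra.
  apply Rlt_le, Rinv_0_lt_compat. repeat apply Rmult_lt_0_compat; try (apply pow_lt); lra.
Qed.

Lemma phi_le_c t : 0 <= t <= 1 -> phi t <= 975/1000.
Proof.
  intros Ht. unfold phi.
  assert (0 < (1 + t)^2 * (1 + 5 * t) * (1 + 45/10 * t)).
  { repeat apply Rmult_lt_0_compat; try (apply pow_lt); lra. }
  apply (Rmult_le_reg_r ((1 + t)^2 * (1 + 5 * t) * (1 + 45/10 * t))); auto.
  unfold Rdiv. rewrite Rmult_assoc, Rinv_l by lra. rewrite Rmult_1_r.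
  pose proof (pow2_ge_0 (t - 13/100)).
  assert (0 <= (t - 13/100)^2 * t) by (apply Rmult_le_pos; nra).
  assert (0 <= (t - 13/100)^2 * t * t) by (apply Rmult_le_pos; nra).
  nra.
Qed.

Lemma div_le_cross a b c d : 0 < b -> 0 < d -> a * d <= c * b -> a / b <= c / d.
Proof.
  intros Hb Hd H. unfold Rdiv.
  apply (Rmult_le_reg_r (b * d)). apply Rmult_lt_0_compat; lra.
  replace (a * / b * (b * d)) with (a * d) by (field; lra).
  replace (c * / d * (b * d)) with (c * b) by (field; lra). lra.
Qed.

Lemma phi_decr s t : 0 < s -> s <= t <= 1 -> 1 <= 225/10 * s * t -> phi t <= phi s.
Proof.
  intros Hs Ht Hst. unfold phi.
  assert (P1 : 0 < (1 + t)^2 * (1 + 5 * t) * (1 + 45/10 * t)).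
  { repeat apply Rmult_lt_0_compat; try (apply pow_lt); lra. }
  assert (P2 : 0 < (1 + s)^2 * (1 + 5 * s) * (1 + 45/10 * s)).
  { repeat apply Rmult_lt_0_compat; try (apply pow_lt); lra. }
  apply div_le_cross; auto.
  assert (K1 : t * ((1 + 5 * s) * (1 + 45/10 * s)) <= s * ((1 + 5 * t) * (1 + 45/10 * t))).
  { assert (0 <= (t - s) * (225/10 * s * t - 1)) by (apply Rmult_le_pos; lra). nra. }
  assert (K2 : (1 + s)^2 <= (1 + t)^2) by (apply pow_incr; lra).
  assert (0 <= (1+s)^2) by (apply pow_le; lra).
  assert (0 <= t * ((1 + 5 * s) * (1 + 45/10 * s))) by (apply Rmult_le_pos; [lra| apply Rmult_le_pos; lra]).
  assert (0 <= s * ((1 + 5 * t) * (1 + 45/10 * t))) by (apply Rmult_le_pos; [lra| apply Rmult_le_pos; lra]).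
  assert (t * ((1 + 5 * s) * (1 + 45/10 * s)) * (1+s)^2 <= s * ((1 + 5 * t) * (1 + 45/10 * t)) * (1+t)^2).
  { apply Rmult_le_compat; lra. }
  lra.
Qed.

Lemma phik_bound q k : 9/10 <= q < 1 -> (k <= 6)%nat ->
  0 <= phi (q ^ (2*k+2)) <= phi ((9/10) ^ (2*k+2)).
Proof.
  intros Hq Hk. split. apply phi_nonneg, pow_le; lra.
  assert (H14 : (9/10)^14 <= (9/10)^(2*k+2)) by (apply pow_decr; lra || lia).
  assert (Hn : 228/1000 <= (9/10)^14) by lra.
  assert (Hs : (9/10)^(2*k+2) <= q^(2*k+2)) by (apply pow_incr; lra).
  assert (q^(2*k+2) <= 1) by (apply pow_le1; lra).
  apply phi_decr; try lra.
  nra.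
Qed.

Lemma prodR_le_upto f g n : (forall i, (i < n)%nat -> 0 <= f i <= g i) -> prodR f n <= prodR g n.
Proof.
  intros H. induction n; simpl. lra.
  assert (0 <= prodR f n).
  { clear IHn. induction n; simpl. lra. apply Rmult_le_pos. apply IHn. intros; apply H; lia.
    apply (H n); lia. }
  pose proof (H n ltac:(lia)).
  assert (prodR f n <= prodR g n) by (apply IHn; intros; apply H; lia).
  apply Rmult_le_compat; lra.
Qed.

Lemma prodR_add f n j : prodR f (n + j) = prodR f n * prodR (fun i => f (n + i)%nat) j.
Proof.
  induction j. simpl. rewrite Nat.add_0_r. ring.
  rewrite Nat.add_succ_r. simpl. rewrite IHj. ring.
Qed.

Definition phit q k := phi (q ^ (2*k+2)).

Lemma a_bound q z m : 9/10 <= q < 1 -> 0 <= z <= 5 -> a q z m <= a q z 0 * prodR (phit q) m.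
Proof.
  intros Hq Hz. rewrite a_prod by lra.
  assert (0 <= a q z 0) by (apply a_nonneg; lra).
  apply Rmult_le_compat_l; auto.
  eapply Rle_trans. apply prod_rho_le; lra.
  apply prodR_le. intros i. apply fk_le_phi; lra.
Qed.

Lemma phit_small q m : 9/10 <= q < 1 -> (m <= 7)%nat -> prodR (phit q) m <= Bn m.
Proof.
  intros Hq Hm. unfold Bn. apply prodR_le_upto. intros i Hi. apply phik_bound; auto. lia.
Qed.

Lemma phit_tail q j : 9/10 <= q < 1 -> prodR (phit q) (7 + j) <= Bn 7 * (975/1000) ^ j.
Proof.
  intros Hq. rewrite prodR_add.
  assert (0 <= prodR (fun i => phit q (7 + i)%nat) j <= (975/1000) ^ j).
  { split. apply prodR_nonneg. intros; apply phi_nonneg, pow_le; lra.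
    induction j. simpl. lra. cbn [prodR].
    replace ((975/1000)^(S j)) with ((975/1000)^j * (975/1000)) by (simpl; ring).
    assert (0 <= phit q (7 + j)%nat <= 975/1000).
    { split. apply phi_nonneg, pow_le; lra. apply phi_le_c. split. apply pow_le; lra. apply pow_le1; lra. }
    assert (0 <= prodR (fun i => phit q (7 + i)%nat) j) by (apply prodR_nonneg; intros; apply phi_nonneg, pow_le; lra).
    apply Rmult_le_compat; lra. }
  assert (0 <= prodR (phit q) 7) by (apply prodR_nonneg; intros; apply phi_nonneg, pow_le; lra).
  pose proof (phit_small q 7 Hq (le_n 7)).
  apply Rmult_le_compat; lra.
Qed.

Lemma A_pos_b q z : 9/10 <= q < 1 -> 0 <= z <= 5 -> 0 < A q z.
Proof.
  intros Hq Hz. unfold A.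
  assert (Hq' : 0 < q < 1) by lra. assert (Hz' : 0 <= z) by lra.
  assert (Ha := ex_series_a q z Hq' Hz').
  assert (Hna := fun m => a_nonneg q z m Hq' Hz').
  assert (HaS : ex_series (fun k => a q z (S k))) by (apply (ex_series_incr_1 (a q z)); auto).
  rewrite Series_incr_1 by (apply ex_series_alt; auto).
  assert (Habs : ex_series (fun k => Rabs ((-1) ^ S k * a q z (S k)))).
  { apply (ex_series_ext (fun k => a q z (S k))). 2: auto.
    intros k. rewrite Rabs_mult, pow_1_abs, Rmult_1_l, Rabs_pos_eq; auto. }
  pose proof (Series_Rabs _ Habs) as HR. cbv beta in HR.
  rewrite (Series_ext (fun k => Rabs ((-1) ^ S k * a q z (S k))) (fun k => a q z (S k))) in HR.
  2:{ intros k. rewrite Rabs_mult, pow_1_abs, Rmult_1_l, Rabs_pos_eq; auto. }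
  apply Rabs_le_between in HR. destruct HR as [HR _].
  rewrite (Series_incr_n (fun k => a q z (S k)) 6) in HR by (lia || auto).
  simpl pred in HR.
  set (a0 := a q z 0) in *.
  assert (Ha0 : 0 < a0).
  { unfold a0, a. cbn [F]. assert (0 <= z * q ^ (2*0+1)) by (apply Rmult_le_pos; [lra| apply pow_le; lra]).
    apply Rmult_lt_0_compat. lra. apply Rinv_0_lt_compat. lra. }
  assert (Hfin : forall j, (j <= 6)%nat -> a q z j <= a0 * Bn j).
  { intros j Hj. eapply Rle_trans. apply a_bound; auto.
    apply Rmult_le_compat_l. lra. apply phit_small; [auto | lia]. }
  assert (Htail : Series (fun k => a q z (S (6 + k))) <= a0 * Bn 7 / (1 - 975/1000)).
  { assert (Hg : ex_series (fun k => a0 * Bn 7 * (975/1000) ^ k)).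
    { apply (ex_series_scal_l (a0 * Bn 7) (fun k => (975/1000)^k)). apply ex_series_geom. rewrite Rabs_pos_eq; lra. }
    eapply Rle_trans. apply (Series_le _ (fun k => a0 * Bn 7 * (975/1000) ^ k)).
    - intros k. split. auto.
      replace (S (6 + k)) with (7 + k)%nat by lia.
      eapply Rle_trans. apply a_bound; auto. rewrite Rmult_assoc.
      apply Rmult_le_compat_l. lra. apply phit_tail; auto.
    - auto.
    - rewrite Series_scal_l, Series_geom by (rewrite Rabs_pos_eq; lra).
      unfold Rdiv. lra. }
  simpl sum_f_R0 in HR.
  pose proof (Hfin 1%nat ltac:(lia)). pose proof (Hfin 2%nat ltac:(lia)).
  pose proof (Hfin 3%nat ltac:(lia)). pose proof (Hfin 4%nat ltac:(lia)).
  pose proof (Hfin 5%nat ltac:(lia)). pose proof (Hfin 6%nat ltac:(lia)).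
  pose proof total_lt1.
  assert (E7 : a0 * Bn 7 / (1 - 975/1000) = a0 * (Bn 7 / (1 - 975/1000))) by (field; lra).
  rewrite E7 in Htail.
  replace ((-1) ^ 0 * a0) with a0 by (simpl; ring).
  assert (a0 * (Bn 1 + Bn 2 + Bn 3 + Bn 4 + Bn 5 + Bn 6 + Bn 7 / (1 - 975 / 1000)) < a0 * 1)
    by (apply Rmult_lt_compat_l; lra).
  lra.
Qed.

Lemma theta_pos_nonneg q x : 0 < q < 1 -> 0 <= x -> 0 < theta q x.
Proof.
  intros Hq Hx. unfold theta.
  change (Series (fun j => q ^ (j * (j + 1) / 2) * x ^ j)) with (Series (b q x)).
  assert (Hb : forall n, 0 <= b q x n) by (intros; unfold b; apply Rmult_le_pos; apply pow_le; lra).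
  assert (HS : ex_series (b q x)) by (apply ex_series_b; lra).
  rewrite Series_incr_1 by auto.
  assert (0 <= Series (fun k => b q x (S k))).
  { assert (E : Series (fun k => 0 * b q x k) = 0) by (rewrite Series_scal_l; ring).
    rewrite <- E. apply Series_le.
    - intros n. split. lra. rewrite Rmult_0_l. apply Hb.
    - apply (ex_series_incr_1 (b q x)); auto. }
  unfold b at 1. simpl. lra.
Qed.

Theorem proposition1 :
  forall q : R, 0 < q < 1 ->
  forall x : R, -5 <= x -> theta q x <> 0.
Proof.
  intros q Hq x Hx.
  apply Rgt_not_eq, Rlt_gt.
  destruct (Rle_lt_dec 0 x) as [H0|H0].
  - apply theta_pos_nonneg; auto.
  - set (z := - x).
    replace x with (- z) by (unfold z; ring).
    assert (Hz : 0 <= z <= 5) by (unfold z; lra).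
    destruct (Rle_lt_dec (9/10) q) as [Hq9|Hq9].
    + rewrite theta_eq_A by lra. apply A_pos_b; lra.
    + destruct (Rle_lt_dec z (46/10)) as [Hz1|Hz1].
      * rewrite theta_eq_A by lra. apply A_pos_c1; lra.
      * assert (Hw : 0 <= q * z <= 46/10) by nra.
        apply c2_reduce; auto.
        destruct (Rle_lt_dec (27/100) q) as [Ha|Ha].
        -- destruct (Rle_lt_dec q (73/100)) as [Hb|Hb].
           ++ apply caseB_all; lra.
           ++ apply caseA; auto.
              assert (q * z * (1 - q) <= 5 * q * (1 - q)).
              { apply Rmult_le_compat_r. lra. nra. }
              assert (0 < (q - 73/100) * (q - 27/100)) by (apply Rmult_lt_0_compat; lra).
              nra.
        -- apply caseA; auto.
           assert (q * z * (1 - q) <= 5 * q * (1 - q)).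
           { apply Rmult_le_compat_r. lra. nra. }
           assert (0 < (73/100 - q) * (27/100 - q)) by (apply Rmult_lt_0_compat; lra).
           nra.
Qed.
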